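(* Let $n$ be a positive integer and $\lambda$ an infinite cardinal. For any shift-continuous $T_1$-topology $\tau$ on the semilattice $\exp_n\lambda$ the following conditions are equivalent: (i) $(\exp_n\lambda,\tau)$ is countably pracompact; (ii) $(\exp_n\lambda,\tau)$ is feebly compact; (iii) $(\exp_n\lambda,\tau)$ is $d$-feebly compact; (iv) the space $(\exp_n\lambda,\tau)$ is $H$-closed.
   Context: For a positive integer $n$ and a cardinal $\lambda$, $\exp_n\lambda=\{A\subseteq\lambda\colon |A|\leqslant n\}$, regarded as a semilattice under $\cap$. A topology on a semilattice is shift-continuous if the semilattice operation is separately continuous. A space $X$ is countably compact at a subset $A$ if every infinite subset of $A$ has an accumulation point in $X$; $X$ is countably pracompact if there is a dense subset $A\subseteq X$ such that $X$ is countably compact at $A$. $X$ is feebly compact if every locally finite open cover of $X$ is finite; $X$ is $d$-feebly compact if every discrete family of open subsets of $X$ is finite. A Hausdorff space is $H$-closed if it is closed in every Hausdorff space containing it as a subspace. *)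

(* Defs.v *)
From Stdlib Require Import List Arith.
Import ListNotations.

Set Implicit Arguments.

Definition set (X : Type) := X -> Prop.

Definition finite_set {X : Type} (A : set X) : Prop :=
  exists l : list X, forall x, A x -> In x l.

(* A type is infinite (models an infinite cardinal lambda). *)
Definition infinite_type (X : Type) : Prop :=
  ~ exists l : list X, forall x : X, In x l.

Definition exp_set (n : nat) (L : Type) (A : set L) : Prop :=
  exists l : list L, length l <= n /\ forall x, A x -> In x l.

Definition expn (n : nat) (L : Type) : Type := { A : set L | exp_set n A }.

Lemma exp_set_inter (n : nat) (L : Type) (A B : set L) :
  exp_set n A -> exp_set n (fun x => A x /\ B x).
Proof.
  intros [l [Hl HA]]. exists l. split; [exact Hl|]. intros x [Hx _]. exact (HA x Hx).
Qed.

Definition exp_meet (n : nat) (L : Type) (a b : expn n L) : expn n L :=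
  exist _ (fun x => proj1_sig a x /\ proj1_sig b x)
        (exp_set_inter (proj1_sig b) (proj2_sig a)).

Record topology (X : Type) := Topology {
  is_open : set X -> Prop;
  open_full : is_open (fun _ => True);
  open_inter : forall U V, is_open U -> is_open V -> is_open (fun x => U x /\ V x);
  open_union : forall F : set (set X), (forall U, F U -> is_open U) ->
                 is_open (fun x => exists U, F U /\ U x)
}.

Section Top.
Context {X : Type} (t : topology X).

Definition is_closed (A : set X) : Prop := is_open t (fun x => ~ A x).

Definition T1 : Prop :=
  forall x y : X, x <> y -> exists U, is_open t U /\ U x /\ ~ U y.

Definition Hausdorff : Prop :=
  forall x y : X, x <> y -> exists U V, is_open t U /\ is_open t V /\ U x /\ V y /\
    forall z, ~ (U z /\ V z).

Definition dense (D : set X) : Prop :=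
  forall U, is_open t U -> (exists x, U x) -> exists x, U x /\ D x.

Definition accumulation_point (x : X) (B : set X) : Prop :=
  forall U, is_open t U -> U x -> exists y, U y /\ B y /\ y <> x.

Definition countably_compact_at (A : set X) : Prop :=
  forall B : set X, (forall y, B y -> A y) -> ~ finite_set B ->
    exists x, accumulation_point x B.

Definition countably_pracompact : Prop :=
  exists A : set X, dense A /\ countably_compact_at A.

Definition finite_family (F : set (set X)) : Prop :=
  exists l : list (set X), forall U, F U -> In U l.

Definition open_family (F : set (set X)) : Prop := forall U, F U -> is_open t U.

Definition is_cover (F : set (set X)) : Prop := forall x, exists U, F U /\ U x.

Definition locally_finite (F : set (set X)) : Prop :=
  forall x, exists W, is_open t W /\ W x /\
    finite_family (fun U => F U /\ exists y, U y /\ W y).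

Definition discrete_family (F : set (set X)) : Prop :=
  forall x, exists W, is_open t W /\ W x /\
    forall U V, F U -> F V -> (exists y, U y /\ W y) -> (exists y, V y /\ W y) -> U = V.

Definition feebly_compact : Prop :=
  forall F, open_family F -> is_cover F -> locally_finite F -> finite_family F.

Definition d_feebly_compact : Prop :=
  forall F, open_family F -> discrete_family F -> finite_family F.

End Top.

Definition embedding {X Y : Type} (tX : topology X) (tY : topology Y) (e : X -> Y) : Prop :=
  (forall x1 x2, e x1 = e x2 -> x1 = x2) /\
  (forall V, is_open tY V -> is_open tX (fun x => V (e x))) /\
  (forall U, is_open tX U -> exists V, is_open tY V /\ forall x, U x <-> V (e x)).

Definition H_closed {X : Type} (t : topology X) : Prop :=
  Hausdorff t /\
  forall (Y : Type) (tY : topology Y) (e : X -> Y),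
    Hausdorff tY -> embedding t tY e -> is_closed tY (fun y => exists x, e x = y).

(* shift-continuity: translations x |-> a /\ x are continuous
   (the semilattice is commutative, so one side suffices) *)
Definition shift_continuous {n : nat} {L : Type} (t : topology (expn n L)) : Prop :=
  forall a : expn n L, forall V, is_open t V -> is_open t (fun x => V (exp_meet a x)).

(* Main.v *)
Require Import Defs.
From Stdlib Require Import List Arith Lia Classical ClassicalEpsilon FunctionalExtensionality PropExtensionality ProofIrrelevance.
Import ListNotations.

Lemma set_ext {X : Type} (U V : set X) : (forall x, U x <-> V x) -> U = V.
Proof.
  intros H. apply functional_extensionality; intro x.
  apply propositional_extensionality. apply H.
Qed.

Lemma open_ext {X : Type} (t : topology X) (U V : set X) :
  is_open t U -> (forall x, U x <-> V x) -> is_open t V.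
Proof. intros HU H. rewrite <- (set_ext _ _ H). exact HU. Qed.

Fixpoint iter_seq {Y : Type} (f : list Y -> Y) (k : nat) : list Y :=
  match k with 0 => [] | S k => f (iter_seq f k) :: iter_seq f k end.

Lemma build_seq {Y : Type} (Q : Y -> Prop) (R : Y -> Y -> Prop) :
  (forall Ls : list Y, exists d, Q d /\ forall d', In d' Ls -> d <> d' /\ R d d') ->
  exists B : set Y, ~ finite_set B /\ (forall d, B d -> Q d) /\
    (forall d1 d2, B d1 -> B d2 -> d1 <> d2 -> R d1 d2 \/ R d2 d1).
Proof.
  intros H.
  set (f := fun Ls => proj1_sig (constructive_indefinite_description _ (H Ls))).
  assert (Hf : forall Ls, Q (f Ls) /\ forall d', In d' Ls -> f Ls <> d' /\ R (f Ls) d').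
  { intros Ls. unfold f. destruct (constructive_indefinite_description _ (H Ls)) as [d Hd]. exact Hd. }
  exists (fun d => exists k, In d (iter_seq f k)).
  assert (Hlen : forall k, length (iter_seq f k) = k) by (induction k; simpl; auto).
  assert (Hnd : forall k, NoDup (iter_seq f k)).
  { induction k; simpl. constructor. constructor; auto. intros Hin.
    destruct (Hf (iter_seq f k)) as [_ H2]. destruct (H2 _ Hin) as [H3 _]. apply H3; reflexivity. }
  assert (Hmono : forall k m, k <= m -> incl (iter_seq f k) (iter_seq f m)).
  { intros k m Hkm. induction Hkm. apply incl_refl. simpl. apply incl_tl. exact IHHkm. }
  split; [|split].
  - intros [l Hl]. assert (Hi : incl (iter_seq f (S (length l))) l).
    { intros d Hd. apply Hl. exists (S (length l)). exact Hd. }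
    pose proof (NoDup_incl_length (Hnd _) Hi) as Hc. rewrite Hlen in Hc. lia.
  - intros d [k Hk]. induction k; simpl in Hk; [contradiction|].
    destruct Hk as [<-|Hk]; [apply Hf|auto].
  - assert (Hk : forall k d1 d2, In d1 (iter_seq f k) -> In d2 (iter_seq f k) -> d1 <> d2 -> R d1 d2 \/ R d2 d1).
    { induction k; simpl; intros d1 d2 H1 H2 Hne; [contradiction|].
      destruct H1 as [<-|H1]; destruct H2 as [<-|H2].
      - congruence.
      - left. apply (proj2 (Hf _) d2 H2).
      - right. apply (proj2 (Hf _) d1 H1).
      - auto. }
    intros d1 d2 [k1 H1] [k2 H2] Hne. apply (Hk (Nat.max k1 k2)); auto.
    + apply (Hmono k1); [lia|auto].
    + apply (Hmono k2); [lia|auto].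
Qed.

Lemma sing_finite {X : Type} (x0 : X) (B : set X) (ls : list (set X)) :
  (forall b, B b -> In (fun y => y = b) ls) -> finite_set B.
Proof.
  intros H. exists (map (fun S => epsilon (inhabits x0) S) ls).
  intros b Hb. apply in_map_iff. exists (fun y => y = b). split; [|auto].
  exact (epsilon_spec (inhabits x0) (fun y => y = b) (ex_intro _ b eq_refl)).
Qed.

Section Main.
Context {n : nat} {L : Type} (hn : 0 < n) (tau : topology (expn n L))
  (hT1 : T1 tau) (hsc : shift_continuous tau).

Definition sub (x y : expn n L) : Prop := forall z, proj1_sig x z -> proj1_sig y z.
Definition up (x : expn n L) : set (expn n L) := fun y => sub x y.
Definition iso (x : expn n L) : Prop := is_open tau (fun y => y = x).

Lemma expn_ext (x y : expn n L) : (forall z, proj1_sig x z <-> proj1_sig y z) -> x = y.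
Proof.
  destruct x as [p hp], y as [q hq]; simpl; intros H.
  assert (p = q) by (apply set_ext; exact H). subst q. f_equal. apply proof_irrelevance.
Qed.

Lemma sub_antisym x y : sub x y -> sub y x -> x = y.
Proof. intros H1 H2. apply expn_ext. intros z; split; auto. Qed.

Lemma exp_empty : exp_set n (fun _ : L => False).
Proof. exists []. split; simpl; [lia| tauto]. Qed.

Definition e0 : expn n L := exist _ _ exp_empty.

Lemma exp_single (a : L) : exp_set n (fun z => z = a).
Proof. exists [a]. split; simpl; [lia| intros x ->; auto]. Qed.

Definition sing (a : L) : expn n L := exist _ _ (exp_single a).

Lemma up_sing_open a : is_open tau (fun y => proj1_sig y a).
Proof.
  assert (Hne : sing a <> e0).
  { intros E. assert (H : proj1_sig (sing a) a) by reflexivity. rewrite E in H. exact H. }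
  destruct (hT1 (sing a) e0 Hne) as [U [HU [HUa HU0]]].
  apply open_ext with (fun y => U (exp_meet (sing a) y)); [apply hsc; auto|].
  intros y; split.
  - intros Hy. destruct (classic (proj1_sig y a)) as [H|H]; auto. exfalso. apply HU0.
    replace e0 with (exp_meet (sing a) y); auto. apply expn_ext. simpl.
    intros z; split; [intros [-> H']; contradiction| intros []].
  - intros Hy. replace (exp_meet (sing a) y) with (sing a); auto. apply expn_ext; simpl.
    intros z; split; [intros ->; auto | tauto].
Qed.

Lemma up_open (x : expn n L) : is_open tau (up x).
Proof.
  destruct (proj2_sig x) as [lx [_ Hlx]].
  assert (H : forall l, is_open tau (fun y => forall z, In z l -> proj1_sig x z -> proj1_sig y z)).
  { induction l as [|a l IH].
    - apply open_ext with (fun _ => True); [apply open_full|]. intros y; split; [intros _ z []|auto].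
    - destruct (classic (proj1_sig x a)) as [Ha|Ha].
      + apply open_ext with (fun y => proj1_sig y a /\ (forall z, In z l -> proj1_sig x z -> proj1_sig y z)).
        * apply open_inter; auto. apply up_sing_open.
        * intros y; split.
          -- intros [H1 H2] z [<-|Hz] Hxz; auto.
          -- intros H; split; [apply H; simpl; auto| intros; apply H; simpl; auto].
      + apply open_ext with (fun y => forall z, In z l -> proj1_sig x z -> proj1_sig y z); auto.
        intros y; split.
        * intros H z [<-|Hz] Hxz; [contradiction|auto].
        * intros H z Hz; apply H; simpl; auto. }
  apply open_ext with (1 := H lx). intros y; split.
  - intros H' z Hz. apply H'; auto.
  - intros H' z _ Hz. apply H'; auto.
Qed.

Lemma neq_open (x : expn n L) : is_open tau (fun y => y <> x).
Proof.
  apply open_ext with (fun y => exists U, (fun U => is_open tau U /\ ~ U x) U /\ U y).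
  - apply open_union. intros U [HU _]; exact HU.
  - intros y; split.
    + intros [U [[_ HUx] HUy]] E. subst. contradiction.
    + intros Hne. destruct (hT1 y x Hne) as [U [HU [HUy HUx]]]. exists U; auto.
Qed.

Lemma nup_open (x : expn n L) : is_open tau (fun y => ~ up x y).
Proof.
  apply open_ext with (fun y => (fun w => w <> x) (exp_meet x y)).
  - apply (hsc x (fun w => w <> x)), neq_open.
  - intros y; cbv beta; split.
    + intros Hne Hup. apply Hne. apply expn_ext. simpl. intros z; split; [tauto| intros Hz; split; auto].
    + intros Hn E. apply Hn. intros z Hz.
      assert (H : proj1_sig (exp_meet x y) z) by (rewrite E; exact Hz). destruct H; auto.
Qed.

Lemma haus : Hausdorff tau.
Proof.
  intros x y Hxy.
  destruct (classic (sub x y)) as [Hs|Hs].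
  - assert (Hn : ~ sub y x) by (intro; apply Hxy, sub_antisym; auto).
    exists (fun w => ~ up y w), (up y).
    refine (conj (nup_open y) (conj (up_open y) (conj Hn (conj (fun z Hz => Hz) _)))).
    intros z [H1 H2]; contradiction.
  - exists (up x), (fun w => ~ up x w).
    refine (conj (up_open x) (conj (nup_open x) (conj (fun z Hz => Hz) (conj Hs _)))).
    intros z [H1 H2]; contradiction.
Qed.

Lemma iso_dense (U : set (expn n L)) : is_open tau U -> forall x, U x -> exists y, U y /\ iso y.
Proof.
  intros HU.
  assert (K : forall d x (l : list L), U x -> NoDup l -> (forall z, In z l -> proj1_sig x z) ->
     length l + d = S n -> exists y, U y /\ iso y).
  { induction d as [|d IH]; intros x l Hx Hnd Hl Hlen.
    - exfalso. destruct (proj2_sig x) as [lx [Hlx Hcov]].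
      assert (Hi : incl l lx) by (intros z Hz; apply Hcov, Hl, Hz).
      pose proof (NoDup_incl_length Hnd Hi). lia.
    - destruct (classic (iso x)) as [Hi|Hi]; [exists x; auto|].
      assert (Hex : exists y, U y /\ up x y /\ y <> x).
      { apply NNPP; intro Hno. apply Hi. apply open_ext with (fun y => U y /\ up x y).
        - apply open_inter; auto. apply up_open.
        - intros y; split.
          + intros [H1 H2]. apply NNPP; intro H3. apply Hno. exists y; auto.
          + intros ->. split; auto. intros z; auto. }
      destruct Hex as [y [Hy [Hxy Hne]]].
      assert (Ha : exists a, proj1_sig y a /\ ~ proj1_sig x a).
      { apply NNPP; intro Hno. apply Hne. apply sub_antisym; auto.
        intros z Hz; apply NNPP; intro; apply Hno; exists z; auto. }
      destruct Ha as [a [Hya Hxa]].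
      apply (IH y (a :: l)).
      + exact Hy.
      + constructor; [intro Hin; apply Hxa, Hl, Hin| exact Hnd].
      + intros z [<-|Hz]; [auto| apply Hxy, Hl, Hz].
      + simpl. lia. }
  intros x Hx. apply (K (S n) x []).
  - exact Hx.
  - constructor.
  - intros z [].
  - simpl; lia.
Qed.

Lemma acc_two p B W : accumulation_point tau p B -> is_open tau W -> W p ->
  exists d1 d2, B d1 /\ B d2 /\ W d1 /\ W d2 /\ d1 <> d2.
Proof.
  intros Hacc HW HWp.
  destruct (Hacc W HW HWp) as [d1 [HW1 [HB1 Hne1]]].
  destruct (hT1 p d1 (not_eq_sym Hne1)) as [U [HU [HUp HUd1]]].
  destruct (Hacc (fun y => W y /\ U y) (open_inter _ _ _ HW HU) (conj HWp HUp))
    as [d2 [[HW2 HU2] [HB2 _]]].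
  exists d1, d2. repeat split; auto. intros E; subst; contradiction.
Qed.

Lemma acc_fin p B W (l : list (expn n L)) : accumulation_point tau p B -> is_open tau W -> W p ->
  (forall y, B y -> W y -> In y l) -> False.
Proof.
  intros Hacc HW HWp Hl.
  assert (K : forall l', exists V, is_open tau V /\ V p /\ forall y, In y l' -> y <> p -> ~ V y).
  { induction l' as [|s l' [V [HV [HVp HVs]]]].
    - exists (fun _ => True). split; [apply open_full|]. split; [exact I| intros y []].
    - destruct (classic (s = p)) as [->|Hs].
      + exists V. split; [exact HV|]. split; [exact HVp|]. intros y [<-|Hy] Hne; [congruence| auto].
      + destruct (hT1 p s (not_eq_sym Hs)) as [U [HU [HUp HUs]]].
        exists (fun y => V y /\ U y). split; [apply open_inter; auto|]. split; [auto|].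
        intros y [<-|Hy] Hne [H1 H2]; [contradiction|]. apply (HVs y Hy Hne H1). }
  destruct (K l) as [V [HV [HVp HVl]]].
  destruct (Hacc (fun y => W y /\ V y)) as [y [[HWy HVy] [HBy Hne]]];
    [apply open_inter; auto| auto|].
  apply (HVl y (Hl y HBy HWy) Hne HVy).
Qed.

Definition CC : Prop := countably_compact_at tau iso.

Lemma C_LF : CC -> forall F, open_family tau F -> locally_finite tau F -> finite_family F.
Proof.
  intros HC F HFo HLF.
  set (ch := fun U : set (expn n L) => epsilon (inhabits e0) (fun z => U z /\ iso z)).
  set (B := fun y => exists U, F U /\ (exists z, U z /\ iso z) /\ y = ch U).
  assert (HchU : forall U, (exists z, U z /\ iso z) -> U (ch U) /\ iso (ch U)).
  { intros U H. apply (epsilon_spec (inhabits e0) (fun z => U z /\ iso z) H). }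
  assert (Hpt : forall y, finite_family (fun U => F U /\ U y)).
  { intros y. destruct (HLF y) as [W [HW [HWy [ls Hls]]]]. exists ls.
    intros U [HU HUy]. apply Hls. split; auto. exists y; auto. }
  assert (Hlist : forall l : list (expn n L), finite_family (fun U => F U /\ exists y, In y l /\ U y)).
  { induction l as [|a l [ls Hls]].
    - exists []. intros U [_ [y [[] _]]].
    - destruct (Hpt a) as [la Hla]. exists (la ++ ls).
      intros U [HU [y [[<-|Hy] HUy]]]; apply in_or_app;
        [left; apply Hla; auto | right; apply Hls; split; auto; exists y; auto]. }
  destruct (classic (finite_set B)) as [[l Hl]|Hinf].
  - destruct (Hlist l) as [ls Hls]. exists ((fun _ => False) :: ls).
    intros U HU. destruct (classic (exists z, U z)) as [[z Hz]|Hno].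
    + right. apply Hls. split; auto. destruct (iso_dense U (HFo U HU) z Hz) as [w Hw].
      assert (Hex : exists z, U z /\ iso z) by (exists w; auto).
      exists (ch U). split; [apply Hl; exists U; auto | apply HchU; auto].
    + left. apply set_ext. intros x; split; [intros [] | intros Hx; apply Hno; exists x; auto].
  - exfalso. destruct (HC B) as [p Hp].
    + intros y [U [_ [Hex ->]]]. apply HchU; auto.
    + exact Hinf.
    + destruct (HLF p) as [W [HW [HWp [lw Hlw]]]].
      apply (acc_fin p B W (map ch lw) Hp HW HWp).
      intros y [U [HU [Hex ->]]] HWy. apply in_map. apply Hlw. split; auto.
      exists (ch U). split; auto. apply HchU; auto.
Qed.

Lemma noacc_C : ~ CC -> exists B, (forall y, B y -> iso y) /\ ~ finite_set B /\
  forall x, exists U, is_open tau U /\ U x /\ forall y, U y -> B y -> y = x.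
Proof.
  intros HnC. apply NNPP. intros Hno. apply HnC. intros B HB Hinf. apply NNPP. intros Hnacc.
  apply Hno. exists B. split; auto. split; auto.
  intros x. apply NNPP. intros Hx. apply Hnacc. exists x. intros U HU HUx. apply NNPP. intros Hy.
  apply Hx. exists U. split; auto. split; auto. intros y HUy HBy. apply NNPP. intros Hne.
  apply Hy. exists y. auto.
Qed.

Lemma iso_sub_open (S : set (expn n L)) : (forall y, S y -> iso y) -> is_open tau S.
Proof.
  intros HS.
  apply open_ext with (fun y => exists U, (fun U => exists b, S b /\ U = (fun w => w = b)) U /\ U y).
  - apply open_union. intros U [b [Hb ->]]. apply HS; auto.
  - intros y; split.
    + intros [U [[b [Hb ->]] E]]. rewrite E; auto.
    + intros Hy; exists (fun w => w = y); split; [exists y; auto| reflexivity].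
Qed.

Lemma nB_open (B : set (expn n L)) :
  (forall x, exists U, is_open tau U /\ U x /\ forall y, U y -> B y -> y = x) ->
  is_open tau (fun y => ~ B y).
Proof.
  intros HU.
  apply open_ext with (fun y => exists U, (fun U => is_open tau U /\ forall w, U w -> ~ B w) U /\ U y).
  - apply open_union. intros U [H _]; exact H.
  - intros y; split.
    + intros [U [[_ H] HUy]]. apply H; auto.
    + intros Hy. destruct (HU y) as [U [HUo [HUy HUB]]]. exists U. split; auto. split; auto.
      intros w Hw HBw. apply Hy. rewrite <- (HUB w Hw HBw). exact HBw.
Qed.

Lemma feebly_C : feebly_compact tau -> CC.
Proof.
  intros HF. apply NNPP. intros HnC. destruct (noacc_C HnC) as [B [HBi [Hinf HU]]].
  set (F := fun U : set (expn n L) => (exists b, B b /\ U = (fun y => y = b)) \/ U = (fun y => ~ B y)).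
  destruct (HF F) as [ls Hls].
  - intros U [[b [Hb ->]] | ->]; [apply HBi; auto | apply nB_open; auto].
  - intros x. destruct (classic (B x)).
    + exists (fun y => y = x). split; [left; exists x; auto| reflexivity].
    + exists (fun y => ~ B y). split; [right; reflexivity | auto].
  - intros x. destruct (HU x) as [W [HW [HWx HWB]]]. exists W. split; auto. split; auto.
    exists [(fun y => ~ B y); (fun y => y = x)]. intros U [[[b [Hb ->]] | ->] [y [HUy HWy]]].
    + cbv beta in HUy. subst y. rewrite (HWB b HWy Hb). simpl; auto.
    + simpl; auto.
  - apply Hinf. apply (sing_finite e0 B ls). intros b Hb. apply Hls. left. exists b. auto.
Qed.

Lemma dfeebly_C : d_feebly_compact tau -> CC.
Proof.
  intros HF. apply NNPP. intros HnC. destruct (noacc_C HnC) as [B [HBi [Hinf HU]]].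
  set (F := fun U : set (expn n L) => exists b, B b /\ U = (fun y => y = b)).
  destruct (HF F) as [ls Hls].
  - intros U [b [Hb ->]]; apply HBi; auto.
  - intros x. destruct (HU x) as [W [HW [HWx HWB]]]. exists W. split; auto. split; auto.
    intros U V [b1 [Hb1 ->]] [b2 [Hb2 ->]] [y1 [H1 HW1]] [y2 [H2 HW2]].
    cbv beta in H1, H2. subst y1 y2.
    rewrite (HWB b1 HW1 Hb1), (HWB b2 HW2 Hb2). reflexivity.
  - apply Hinf. apply (sing_finite e0 B ls). intros b Hb. apply Hls. exists b. auto.
Qed.

Definition optop (B : set (expn n L)) : topology (option (expn n L)).
Proof.
  refine (@Topology (option (expn n L))
    (fun V => is_open tau (fun x => V (Some x)) /\
       (V None -> exists l, forall b, B b -> ~ In b l -> V (Some b))) _ _ _).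
  - split; [apply open_full | intros _; exists []; auto].
  - intros U V [HU1 HU2] [HV1 HV2]. split; [apply open_inter; auto|].
    intros [HUn HVn]. destruct (HU2 HUn) as [l1 H1], (HV2 HVn) as [l2 H2].
    exists (l1 ++ l2). intros b Hb Hnin.
    split; [apply H1 | apply H2]; auto; intro; apply Hnin; apply in_or_app; auto.
  - intros F HF. split.
    + apply open_ext with (fun x => exists W, (fun W => exists U, F U /\ W = (fun x => U (Some x))) W /\ W x).
      * apply open_union. intros W [U [HU ->]]. apply (HF U HU).
      * intros x; split.
        -- intros [W [[U [HU ->]] HW]]; exists U; auto.
        -- intros [U [HU HUx]]; exists (fun x => U (Some x)); split; [exists U; auto| auto].
    + intros [U [HU HUn]]. destruct (proj2 (HF U HU) HUn) as [l Hl]. exists l.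
      intros b Hb Hnin. exists U; auto.
Defined.

Lemma Hclosed_C : H_closed tau -> CC.
Proof.
  intros [_ HH]. apply NNPP. intros HnC. destruct (noacc_C HnC) as [B [HBi [Hinf HU]]].
  assert (Hhaus : Hausdorff (optop B)).
  { intros [x|] [y|] Hne.
    - assert (Hxy : x <> y) by congruence.
      destruct (haus x y Hxy) as [U [V [HU' [HV [HUx [HVy Hd]]]]]].
      exists (fun o => match o with Some w => U w | None => False end),
             (fun o => match o with Some w => V w | None => False end).
      split; [split; [exact HU' | intros []]|].
      split; [split; [exact HV | intros []]|].
      split; auto. split; auto. intros [w|]; [apply Hd | tauto].
    - destruct (HU x) as [W [HW [HWx HWB]]].
      exists (fun o => match o with Some w => W w | None => False end),
             (fun o => match o with Some w => B w /\ w <> x | None => True end).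
      split; [split; [exact HW | intros []]|].
      split; [split; [apply iso_sub_open; intros y [Hy _]; apply HBi; auto
                     | intros _; exists [x]; intros b Hb Hnin; split; auto; intro; apply Hnin; left; auto]|].
      split; auto. split; auto.
      intros [w|] [H1 H2]; [destruct H2 as [HBw Hne']; apply Hne'; apply HWB; auto | contradiction].
    - destruct (HU y) as [W [HW [HWy HWB]]].
      exists (fun o => match o with Some w => B w /\ w <> y | None => True end),
             (fun o => match o with Some w => W w | None => False end).
      split; [split; [apply iso_sub_open; intros z [Hz _]; apply HBi; auto
                     | intros _; exists [y]; intros b Hb Hnin; split; auto; intro; apply Hnin; left; auto]|].
      split; [split; [exact HW | intros []]|].
      split; auto. split; auto.
      intros [w|] [H1 H2]; [destruct H1 as [HBw Hne']; apply Hne'; apply HWB; auto | contradiction].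
    - congruence. }
  assert (Hemb : embedding tau (optop B) Some).
  { split; [intros x1 x2 E; injection E; auto|]. split; [intros V [HV _]; exact HV|].
    intros U HU'. exists (fun o => match o with Some w => U w | None => False end).
    split; [split; [exact HU'| intros []]| intros x; simpl; tauto]. }
  pose proof (HH _ (optop B) Some Hhaus Hemb) as Hc. unfold is_closed in Hc. simpl in Hc.
  destruct Hc as [_ Hn]. destruct Hn as [l Hl].
  - intros [x Hx]. discriminate.
  - apply Hinf. exists l. intros b Hb. apply NNPP. intros Hnin. apply (Hl b Hb Hnin). exists b. reflexivity.
Qed.

Lemma adherent (HC : CC) (TT : set (set (expn n L)))
  (Hop : forall T, TT T -> is_open tau T) (Hne : forall T, TT T -> exists z, T z)
  (Hint : forall T1 T2, TT T1 -> TT T2 -> exists T3, TT T3 /\ forall z, T3 z -> T1 z /\ T2 z)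
  (HT0ex : exists T0, TT T0) :
  exists p, forall O, is_open tau O -> O p -> forall T, TT T -> exists z, O z /\ T z.
Proof.
  set (good := fun x : expn n L => forall T, TT T -> exists y, T y /\ sub x y).
  assert (Hmax : exists x, good x /\ forall a, ~ proj1_sig x a ->
            exists T, TT T /\ forall y, T y -> sub x y -> ~ proj1_sig y a).
  { assert (K : forall d (x : expn n L) (l : list L), good x -> NoDup l ->
              (forall z, In z l -> proj1_sig x z) -> length l + d = S n ->
              exists x, good x /\ forall a, ~ proj1_sig x a ->
                exists T, TT T /\ forall y, T y -> sub x y -> ~ proj1_sig y a).
    { induction d as [|d IH]; intros x l Hg Hnd Hl Hlen.
      - exfalso. destruct (proj2_sig x) as [lx [Hlx Hcov]].
        assert (Hi : incl l lx) by (intros z Hz; apply Hcov, Hl, Hz).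
        pose proof (NoDup_incl_length Hnd Hi). lia.
      - destruct (classic (forall a, ~ proj1_sig x a -> exists T, TT T /\
                     forall y, T y -> sub x y -> ~ proj1_sig y a)) as [Hm|Hm]; [exists x; auto|].
        apply not_all_ex_not in Hm. destruct Hm as [a Ha].
        apply imply_to_and in Ha. destruct Ha as [Hxa Ha].
        assert (Hall : forall T, TT T -> exists y, T y /\ sub x y /\ proj1_sig y a).
        { intros T HT. apply NNPP. intros Hno. apply Ha. exists T. split; auto.
          intros y Hy Hxy Hya. apply Hno. exists y; auto. }
        destruct HT0ex as [T0 HT0]. destruct (Hall T0 HT0) as [y0 [_ [Hxy0 Hy0a]]].
        assert (Hexp : exp_set n (fun z => proj1_sig x z \/ z = a)).
        { destruct (proj2_sig y0) as [ly [Hly Hcy]]. exists ly. split; auto.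
          intros z [Hz| ->]; apply Hcy; auto. }
        apply (IH (exist _ (fun z => proj1_sig x z \/ z = a) Hexp) (a :: l)).
        + intros T HT. destruct (Hall T HT) as [y [Hy [Hxy Hya]]]. exists y. split; auto.
          intros z [Hz| ->]; auto.
        + constructor; [intro Hin; apply Hxa, Hl, Hin| exact Hnd].
        + intros z [<-|Hz]; simpl; auto.
        + simpl; lia. }
    apply (K (S n) e0 []).
    - intros T HT. destruct (Hne T HT) as [z Hz]. exists z. split; [exact Hz| intros w []].
    - constructor.
    - intros z [].
    - simpl; lia. }
  destruct Hmax as [x [Hgood Hmax]].
  exists x. apply NNPP. intros Hno.
  assert (Hbad : exists O T, is_open tau O /\ O x /\ TT T /\ forall z, O z -> T z -> False).
  { apply NNPP; intro H. apply Hno. intros O HO HOx T HT. apply NNPP; intro H'. apply H.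
    exists O, T. repeat split; auto. intros z Hz1 Hz2. apply H'; exists z; auto. }
  destruct Hbad as [O [T [HO [HOx [HT HOT]]]]].
  assert (Hfin : forall l : list L, exists T', TT T' /\ (forall z, T' z -> T z) /\
            forall a, In a l -> ~ proj1_sig x a -> forall y, T' y -> sub x y -> ~ proj1_sig y a).
  { induction l as [|a l [T' [HT' [HT'T HT'l]]]].
    - exists T. split; [exact HT|]. split; [auto| intros a []].
    - destruct (classic (proj1_sig x a)) as [Ha|Ha].
      + exists T'. split; [exact HT'|]. split; [exact HT'T|]. intros b [<-|Hb]; [contradiction| apply HT'l; auto].
      + destruct (Hmax a Ha) as [Ta [HTa HTa']].
        destruct (Hint T' Ta HT' HTa) as [T3 [HT3 HT3']].
        exists T3. split; [exact HT3|]. split; [intros z Hz; apply HT'T, (HT3' z Hz)|].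
        intros b [<-|Hb] Hxb y Hy Hxy.
        * apply (HTa' y); auto. apply (HT3' y Hy).
        * apply (HT'l b Hb Hxb y); auto. apply (HT3' y Hy). }
  assert (Hcov : forall Ls : list (expn n L), exists la : list L,
             forall d, In d Ls -> forall z, proj1_sig d z -> In z la).
  { induction Ls as [|d Ls [la Hla]].
    - exists []. intros d [].
    - destruct (proj2_sig d) as [ld [_ Hld]]. exists (ld ++ la).
      intros d' [<-|Hd'] z Hz; apply in_or_app; [left; apply Hld; auto| right; apply (Hla d'); auto]. }
  assert (Hstep : forall Ls : list (expn n L), exists d, (iso d /\ T d /\ sub x d) /\
            forall d', In d' Ls -> d <> d' /\
              (forall z, proj1_sig d z -> proj1_sig d' z -> proj1_sig x z)).
  { intros Ls. destruct (Hcov Ls) as [la Hla]. destruct (Hfin la) as [T' [HT' [HT'T HT'l]]].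
    destruct (Hgood T' HT') as [y [HyT' Hxy]].
    destruct (iso_dense (fun w => T' w /\ sub x w) (open_inter _ _ _ (Hop T' HT') (up_open x)) y
                (conj HyT' Hxy)) as [d [[HdT' Hxd] Hdi]].
    assert (HR : forall d', In d' Ls -> forall z, proj1_sig d z -> proj1_sig d' z -> proj1_sig x z).
    { intros d' Hd' z Hdz Hd'z. apply NNPP. intros Hxz.
      apply (HT'l z (Hla d' Hd' z Hd'z) Hxz d HdT' Hxd Hdz). }
    exists d. split; [split; [auto| split; [apply HT'T; auto| auto]]|].
    intros d' Hd'. split; [|apply HR; auto].
    intros E. subst d'.
    assert (Edx : d = x) by (apply sub_antisym; auto; intros z Hz; apply (HR d Hd' z Hz Hz)).
    subst d. apply (HOT x HOx). apply HT'T; auto. }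
  destruct (build_seq (fun d => iso d /\ T d /\ sub x d)
              (fun d d' => forall z, proj1_sig d z -> proj1_sig d' z -> proj1_sig x z) Hstep)
    as [B [Hinf [HBQ HBR]]].
  destruct (HC B) as [p Hp].
  - intros d Hd. apply (HBQ d Hd).
  - exact Hinf.
  - destruct (acc_two p B (up p) Hp (up_open p) (fun z Hz => Hz))
      as [d1 [d2 [HB1 [HB2 [Hp1 [Hp2 Hne12]]]]]].
    assert (Hpx : sub p x).
    { intros z Hz. destruct (HBR d1 d2 HB1 HB2 Hne12) as [HR|HR]; apply HR;
        [apply Hp1| apply Hp2 | apply Hp2 | apply Hp1]; auto. }
    destruct (classic (sub x p)) as [Hxp|Hxp].
    + assert (Epx : p = x) by (apply sub_antisym; auto). subst p.
      destruct (Hp O HO HOx) as [d [HOd [HBd _]]]. apply (HOT d HOd). apply (HBQ d HBd).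
    + destruct (Hp (fun w => ~ up x w) (nup_open x) Hxp) as [d [Hd [HBd _]]].
      apply Hd. apply (HBQ d HBd).
Qed.

Lemma C_Hclosed (HC : CC) : H_closed tau.
Proof.
  split; [apply haus|].
  intros Y tY e HY [Hinj [Hcont Hopen]].
  unfold is_closed.
  apply open_ext with (fun y => exists V, (fun V => is_open tY V /\ forall x, ~ V (e x)) V /\ V y).
  - apply open_union. intros V [HV _]; exact HV.
  - intros y; cbv beta; split.
    + intros [V [[HV HVe] HVy]] [x Ex]. subst y. apply (HVe x HVy).
    + intros Hy. apply NNPP. intros Hno.
      destruct (adherent HC (fun T => exists V, is_open tY V /\ V y /\ forall x, T x <-> V (e x)))
        as [p Hp].
      * intros T [V [HV [_ HTV]]]. apply open_ext with (fun x => V (e x)); [apply Hcont; auto|].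
        intros x; specialize (HTV x); tauto.
      * intros T [V [HV [HVy HTV]]]. apply NNPP. intros Hne. apply Hno. exists V.
        split; auto. split; auto. intros x HVx. apply Hne. exists x. apply HTV; auto.
      * intros T1 T2 [V1 [HV1 [HV1y H1]]] [V2 [HV2 [HV2y H2]]].
        exists (fun x => T1 x /\ T2 x). split; [|auto].
        exists (fun w => V1 w /\ V2 w). split; [apply open_inter; auto|]. split; [auto|].
        intros x. specialize (H1 x); specialize (H2 x); tauto.
      * exists (fun _ => True). exists (fun _ => True). split; [apply open_full|]. split; auto.
        intros x; tauto.
      * assert (Hpy : e p <> y) by (intros E; apply Hy; exists p; auto).
        destruct (HY (e p) y Hpy) as [P [Q [HP [HQ [HPp [HQy HPQ]]]]]].
        destruct (Hp (fun x => P (e x)) (Hcont P HP) HPp (fun x => Q (e x))) as [z [Hz1 Hz2]].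
        -- exists Q. split; auto. split; auto. intros x; tauto.
        -- apply (HPQ (e z)); auto.
Qed.

Lemma pra_C : countably_pracompact tau -> CC.
Proof.
  intros [A' [Hd Hcc]] B HB Hinf. apply (Hcc B); auto. intros y Hy.
  destruct (Hd (fun w => w = y) (HB y Hy)) as [z [Ez Hz]]; [exists y; auto|].
  cbv beta in Ez. subst z. exact Hz.
Qed.

Lemma C_pra : CC -> countably_pracompact tau.
Proof.
  intros HC. exists iso. split; auto.
  intros U HU [x Hx]. destruct (iso_dense U HU x Hx) as [y [Hy Hi]]. exists y; auto.
Qed.

Lemma C_feebly : CC -> feebly_compact tau.
Proof. intros HC F Ho _ Hlf. apply C_LF; auto. Qed.

Lemma C_dfeebly : CC -> d_feebly_compact tau.
Proof.
  intros HC F Ho Hdisc. apply C_LF; auto.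
  intros x. destruct (Hdisc x) as [W [HW [HWx Hu]]]. exists W. split; auto. split; auto.
  destruct (classic (exists U, F U /\ exists y, U y /\ W y)) as [[U0 [HU0 HU0W]]|Hn].
  - exists [U0]. intros U [HU HUW]. left. apply (Hu U0 U HU0 HU HU0W HUW).
  - exists []. intros U [HU HUW]. apply Hn. exists U; auto.
Qed.

Lemma main_sec :
  (countably_pracompact tau <-> feebly_compact tau) /\
  (feebly_compact tau <-> d_feebly_compact tau) /\
  (d_feebly_compact tau <-> H_closed tau).
Proof.
  split; [|split]; split; intro H.
  - apply C_feebly, pra_C; auto.
  - apply C_pra, feebly_C; auto.
  - apply C_dfeebly, feebly_C; auto.
  - apply C_feebly, dfeebly_C; auto.
  - apply C_Hclosed, dfeebly_C; auto.
  - apply C_dfeebly, Hclosed_C; auto.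
Qed.

End Main.

Theorem theorem10 (n : nat) (L : Type) (hn : 0 < n) (hL : infinite_type L)
  (tau : topology (expn n L)) (hT1 : T1 tau) (hsc : shift_continuous tau) :
  (countably_pracompact tau <-> feebly_compact tau) /\
  (feebly_compact tau <-> d_feebly_compact tau) /\
  (d_feebly_compact tau <-> H_closed tau).
Proof.
  eapply main_sec; eauto.
Qed.
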